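(* Let $\Phi$ be a root system of rank $r$ and $0\le k\le r$. The $k$-step good root subsystems of $\Phi$ are exactly the closed root subsystems of $\Phi$ of rank $r-k$ that are maximal with respect to inclusion among all closed root subsystems of $\Phi$ of rank $r-k$.
   Context: Root systems are reduced and crystallographic. A root subsystem $\Psi\subseteq\Phi$ is closed if $\lambda,\mu\in\Psi$, $\lambda+\mu\in\Phi$ imply $\lambda+\mu\in\Psi$; $\operatorname{rk}\Psi=\dim\operatorname{Span}\Psi$. A good root subsystem of a root system $\Theta$ of rank $m$ is a closed root subsystem of rank $m-1$ maximal under inclusion among closed root subsystems of $\Theta$ of rank $m-1$. The $0$-step good root subsystem of $\Phi$ is $\Phi$ itself; for $k\ge1$, a $k$-step good root subsystem of $\Phi$ is a good root subsystem of some $(k-1)$-step good root subsystem of $\Phi$ (viewed as a root system in its own right). *)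

(* Defs.v *)
From HB Require Import structures.
From mathcomp Require Import all_boot all_order all_algebra.
Set Implicit Arguments. Unset Strict Implicit. Unset Printing Implicit Defensive.
Import Order.TTheory GRing.Theory Num.Theory.
Local Open Scope ring_scope.

Section RootSystems.
Variables (R : realFieldType) (n : nat).
Notation V := 'rV[R]_n.

Definition dotv (u v : V) : R := (u *m v^T) 0 0.

Definition cartan (b a : V) : R := 2 * dotv b a / dotv a a.

Definition refl (a b : V) : V := b - cartan b a *: a.

(* A (finite) set of vectors, given by a list (only membership matters),
   is a reduced crystallographic root system (not required to span V). *)
Definition root_system (Phi : seq V) : Prop :=
  [/\ (0 : V) \notin Phi,
      {in Phi &, forall a b, refl a b \in Phi},
      {in Phi &, forall a b, exists z : int, cartan b a = z%:~R} &
      {in Phi, forall a (c : R), c *: a \in Phi -> c = 1 \/ c = -1}].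

Definition rk (Phi : seq V) : nat := \dim <<Phi>>%VS.

Definition root_subsystem (Theta Psi : seq V) : Prop :=
  {subset Psi <= Theta} /\ root_system Psi.

Definition closed_subsystem (Theta Psi : seq V) : Prop :=
  root_subsystem Theta Psi /\
  {in Psi &, forall a b, a + b \in Theta -> a + b \in Psi}.

Definition maximal_closed_of_rank (Theta : seq V) (m : nat) (Psi : seq V) : Prop :=
  [/\ closed_subsystem Theta Psi, rk Psi = m &
      forall Psi' : seq V, closed_subsystem Theta Psi' -> rk Psi' = m ->
        {subset Psi <= Psi'} -> {subset Psi' <= Psi}].

Definition good_subsystem (Theta Psi : seq V) : Prop :=
  (rk Psi).+1 = rk Theta /\ maximal_closed_of_rank Theta (rk Psi) Psi.

Fixpoint kstep_good (k : nat) (Phi Psi : seq V) : Prop :=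
  match k with
  | 0 => Psi =i Phi
  | k'.+1 => exists Theta : seq V, kstep_good k' Phi Theta /\ good_subsystem Theta Psi
  end.

End RootSystems.

(* Main.v *)
Require Import Defs.
From HB Require Import structures.
From mathcomp Require Import all_boot all_order all_algebra.
From mathcomp Require Import zify.
From Stdlib Require Import Classical.
Set Implicit Arguments. Unset Strict Implicit. Unset Printing Implicit Defensive.
Import Order.TTheory GRing.Theory Num.Theory.
Local Open Scope ring_scope.

Section Aux.
Variables (R : realFieldType) (n : nat).
Notation V := 'rV[R]_n.

Lemma root_system_eq (A B : seq V) : A =i B -> root_system A -> root_system B.
Proof.
move=> AB [h0 h1 h2 h3]; split.
- by rewrite -AB.
- by move=> a b aB bB; rewrite -AB; apply: h1; rewrite AB.
- by move=> a b aB bB; apply: h2; rewrite AB.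
- by move=> a aB c cB; apply: (h3 a _ c); rewrite AB.
Qed.

Definition restr (Theta : seq V) (W : {vspace V}) := [seq x <- Theta | x \in W].

Lemma mem_restr Theta W x : (x \in restr Theta W) = (x \in Theta) && (x \in W).
Proof. by rewrite mem_filter andbC. Qed.

Lemma restr_closed Theta W : root_system Theta -> closed_subsystem Theta (restr Theta W).
Proof.
move=> [h0 h1 h2 h3]; split; [split; [|split]|].
- by move=> x; rewrite mem_restr => /andP[].
- by rewrite mem_restr (negPf h0).
- move=> a b; rewrite !mem_restr => /andP[aT aW] /andP[bT bW].
  rewrite h1 //= /refl; apply: memvB => //; exact: memvZ.
- move=> a b; rewrite !mem_restr => /andP[aT _] /andP[bT _]; exact: h2.
- move=> a; rewrite !mem_restr => /andP[aT _] c; rewrite mem_restr => /andP[cT _].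
  exact: (h3 a aT c cT).
- move=> a b; rewrite !mem_restr => /andP[_ aW] /andP[_ bW] ->; exact: memvD.
Qed.

Lemma rk_between (P X : seq V) : {subset P <= X} -> {subset X <= <<P>>%VS} ->
  rk X = rk P.
Proof.
move=> PX XP; rewrite /rk; congr (\dim _); apply/eqP.
rewrite eqEdim; apply/andP; split; first by apply/span_subvP.
exact/dimvS/sub_span.
Qed.


Lemma count_le (a b : pred V) (s : seq V) :
  (forall x, x \in s -> a x -> b x) -> (count a s <= count b s)%N.
Proof.
elim: s => //= x s IH sub.
have h : forall z, z \in s -> a z -> b z by move=> z zs; apply: sub; rewrite in_cons zs orbT.
apply: leq_add (IH h); case ax: (a x) => //=; rewrite sub ?mem_head //.
Qed.

Lemma count_lt (a b : pred V) (s : seq V) y :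
  (forall x, x \in s -> a x -> b x) -> y \in s -> b y -> ~~ a y ->
  (count a s < count b s)%N.
Proof.
elim: s => // x s IH sub ys bY aY.
have h : forall z, z \in s -> a z -> b z by move=> z zs; apply: sub; rewrite in_cons zs orbT.
move: ys; rewrite in_cons => /orP[/eqP<- | ys] /=.
- by rewrite (negPf aY) bY add0n add1n ltnS count_le.
- have := IH h ys bY aY; case ax: (a x) => /=.
  + by rewrite sub ?mem_head // ltn_add2l.
  + case: (b x) => /= ?; lia.
Qed.

Lemma exists_maximal (Phi T0 : seq V) (m : nat) :
  closed_subsystem Phi T0 -> rk T0 = m ->
  exists Theta, maximal_closed_of_rank Phi m Theta /\ {subset T0 <= Theta}.
Proof.
move=> c0 r0.
move: {2}(size Phi - count (mem T0) Phi)%N (leqnn (size Phi - count (mem T0) Phi)%N) => N.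
elim: N T0 c0 r0 => [|N IH] T0 c0 r0 hN.
- exists T0; split => //; split => // Psi' c' r' sub y yP.
  case: (boolP (y \in T0)) => // yT.
  have yPhi : y \in Phi by case: c' => [[s _] _]; apply: s.
  have := count_lt (a := mem T0) (b := mem Psi') (s := Phi)
    (fun x _ xT => sub x xT) yPhi yP yT.
  have := count_size (mem Psi') Phi; move=> h1 h2; idtac; move: hN h1 h2; set u := count _ _; set v := count _ _; move=> q1 q2 q3; exfalso; clearbody u v; move: q1 q2 q3; clear; move=> q1 q2 q3. set w := size Phi in q1 q2. lia.
- case: (classic (forall Psi' : seq V, closed_subsystem Phi Psi' -> rk Psi' = m ->
        {subset T0 <= Psi'} -> {subset Psi' <= T0})) => [H|H].
  + by exists T0; split => //; split.
  + have [Psi' H1] := not_all_ex_not _ _ H.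
    have [c' H2] := imply_to_and _ _ H1.
    have [r' H3] := imply_to_and _ _ H2.
    have [sub {}H] := imply_to_and _ _ H3.
    have [y yP yT] : exists2 y, y \in Psi' & y \notin T0.
      apply: NNPP => nE; apply: H => y yP; case: (boolP (y \in T0)) => // yT.
      by exfalso; apply: nE; exists y.
    have yPhi : y \in Phi by case: c' => [[s _] _]; apply: s.
    have := count_lt (a := mem T0) (b := mem Psi') (s := Phi)
      (fun x _ xT => sub x xT) yPhi yP yT.
    have := count_size (mem Psi') Phi; move=> h1 h2.
    have hlt : (size Phi - count (mem Psi') Phi <= N)%N.
      move: hN h1 h2; set u := count _ _; set v := count _ _; move=> q1 q2 q3.
      clearbody u v; move: q1 q2 q3; clear; move=> q1 q2 q3.
      set w := size Phi in q1 q2 *. lia.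
    have [Theta [mT sT]] := IH Psi' c' r' hlt.
    by exists Theta; split => // x /sub /sT.
Qed.

Lemma closed_self (Phi : seq V) : root_system Phi -> closed_subsystem Phi Phi.
Proof. by move=> rs; split; [split|] => // a b _ _. Qed.

End Aux.

Theorem mainTheorem11 (R : realFieldType) (n : nat) (Phi : seq 'rV[R]_n)
  (k : nat) :
  root_system Phi -> (k <= rk Phi)%N ->
  forall Psi : seq 'rV[R]_n,
    kstep_good k Phi Psi <-> maximal_closed_of_rank Phi (rk Phi - k) Psi.
Proof.
move=> rs; elim: k => [|k IH] kr Psi.
- rewrite subn0 /=; split.
  + move=> e; split.
    * split; last by move=> a b _ _; rewrite e.
      split; first by move=> x; rewrite e.
      exact: root_system_eq (fun x => esym (e x)) rs.
    * by rewrite /rk (eq_span e).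
    * by move=> Psi' [[s _] _] _ _ x /s; rewrite e.
  + case=> [[[s rsP] cl] r mx] x.
    apply/idP/idP; first exact: s.
    by apply: (mx Phi) => //; apply: closed_self.
- have kr' : (k <= rk Phi)%N by apply: ltnW.
  have IHk := IH kr'.
  rewrite /=; split.
  + case=> Theta [/IHk [[[sT rsT] clT] rT mT] [rP [[[sP rsP] clP] _ mP]]].
    have rPsi : rk Psi = (rk Phi - k.+1)%N by lia.
    split.
    * split; first by split => // x /sP /sT.
      move=> a b aP bP abPhi; apply: clP => //; apply: clT => //; exact: sP.
    * done.
    * move=> Psi' [[sP' rsP'] clP'] r' sub x xP'.
      have xPhi := sP' x xP'.
      have sPP' : (<<Psi'>> <= <<Psi>>)%VS.
        rewrite -(geq_leqif (dimv_leqif_sup (sub_span sub))).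
        by move: r' rPsi; rewrite /rk => -> ->.
      have xS : x \in <<Psi>>%VS := subvP sPP' x (memv_span xP').
      have xTh : x \in Theta.
        apply: (mT (restr Phi <<Theta>>)).
        - exact: restr_closed.
        - rewrite -rT; apply: rk_between.
          + by move=> y yT; rewrite mem_restr (sT y yT) memv_span.
          + by move=> y; rewrite mem_restr => /andP[].
        - by move=> y yT; rewrite mem_restr (sT y yT) memv_span.
        - by rewrite mem_restr xPhi (subvP (sub_span sP) x xS).
      apply: (mP (restr Theta <<Psi>>)).
      - exact: restr_closed.
      - apply: rk_between.
        + by move=> y yP; rewrite mem_restr (sP y yP) memv_span.
        + by move=> y; rewrite mem_restr => /andP[].
      - by move=> y yP; rewrite mem_restr (sP y yP) memv_span.
      - by rewrite mem_restr xTh xS.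
  + case=> [[[sP rsP] clP] rP mP].
    case: (boolP (all (fun a => a \in <<Psi>>%VS) Phi)) => [/allP h | ].
      have : (<<Phi>> <= <<Psi>>)%VS by apply/span_subvP.
      move/dimvS; rewrite -/(rk Phi) -/(rk Psi) rP; lia.
    rewrite -has_predC => /hasP [a aP aN].
    set W := <<a :: Psi>>%VS.
    have c0 := restr_closed W rs.
    have r0 : rk (restr Phi W) = (rk Phi - k)%N.
      have -> : rk (restr Phi W) = rk (a :: Psi).
        apply: rk_between.
        + move=> y yin; rewrite mem_restr (memv_span yin) andbT.
          by move: yin; rewrite in_cons => /orP[/eqP -> | /sP].
        + by move=> y; rewrite mem_restr => /andP[].
      have le1 : (rk (a :: Psi) <= (rk Psi).+1)%N.
        rewrite /rk span_cons.
        have := dimv_sum_cap <[a]>%VS <<Psi>>%VS; rewrite dim_vline.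
        case: (a != 0) => /=; lia.
      have lt1 : (rk Psi < rk (a :: Psi))%N.
        have sub1 : {subset Psi <= a :: Psi} by move=> y yP; rewrite in_cons yP orbT.
        rewrite /rk (ltn_leqif (dimv_leqif_sup (sub_span sub1))).
        apply/negP => /subvP hs.
        by have := hs a (memv_span (mem_head _ _)); rewrite (negPf aN).
      lia.
    have [Theta [[[[sT rsT] clT] rT mT] sTh]] := exists_maximal c0 r0.
    exists Theta; split; first by apply/IHk; split.
    split; first lia.
    split.
    * split; last first.
        move=> u v uP vP uvT; apply: clP => //; exact: sT.
      split => // x xP; apply: sTh.
      by rewrite mem_restr (sP x xP) memv_span // in_cons xP orbT.
    * done.
    * move=> Psi' [[sP' rsP'] clP'] r' sub; apply: mP => //; last by rewrite r'.
      split; first by split => // x /sP' /sT.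
      move=> u v uP vP uvPhi; apply: clP' => //; apply: clT => //; exact: sP'.
Qed.
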